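(* Let $A,B\subseteq[n]$ satisfy $A\subseteq B$, or $B\subseteq A$, or $A\cap B=\emptyset$. Then $[\Gamma_A,\Gamma_B]=0$.
   Context: Fix $n\ge1$ and real parameters $\mu_1,\dots,\mu_n>0$; write $[n]=\{1,\dots,n\}$. For $i\in[n]$, $r_i$ is the reflection $(r_if)(x)=f(x_1,\dots,-x_i,\dots,x_n)$ and $T_i=\partial_{x_i}+\frac{\mu_i}{x_i}(1-r_i)$. $\mathcal{C}\ell_n$ is generated by $e_1,\dots,e_n$ with $e_ie_j+e_je_i=-2\delta_{ij}$, $V$ is a fixed left $\mathcal{C}\ell_n$-module, and operators act on $\mathcal{P}(\mathbb{R}^n)\otimes V$ with $x_i,T_i,r_i$ acting on the polynomial factor and $e_i$ on $V$. For $A\subseteq[n]$: $\underline{D}_A=\sum_{i\in A}e_iT_i$, $\underline{x}_A=\sum_{i\in A}e_ix_i$, $\underline{S}_A=\frac12([\underline{x}_A,\underline{D}_A]-1)$, $\Gamma_A=\underline{S}_A\prod_{i\in A}r_i$ (empty sums $0$, empty products $1$). *)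

(* Defs.v *)
From HB Require Import structures.
From mathcomp Require Import all_boot all_order all_algebra.
Set Implicit Arguments. Unset Strict Implicit. Unset Printing Implicit Defensive.
Import Order.TTheory GRing.Theory Num.Theory.
Local Open Scope ring_scope.

(* Multi-indices alpha in N^n; an element of P(R^n) (x) V is represented by
   its coefficient map alpha |-> coefficient of x^alpha (in V), with finite
   support (see [is_poly]). *)
Definition midx (n : nat) := {ffun 'I_n -> nat}.
Definition PV (n : nat) (V : Type) := midx n -> V.

Definition is_poly (n : nat) (V : zmodType) (f : PV n V) : Prop :=
  exists s : seq (midx n), forall a, a \notin s -> f a = 0.

Definition incr n (i : 'I_n) (a : midx n) : midx n :=
  [ffun j => (a j + (j == i))%N].
Definition decr n (i : 'I_n) (a : midx n) : midx n :=
  [ffun j => (a j - (j == i))%N].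

Section Ops.
Variables (R : realFieldType) (V : lmodType R) (n : nat).

(* multiplication by x_i *)
Definition xop (i : 'I_n) (f : PV n V) : PV n V :=
  fun a => if (0 < a i)%N then f (decr i a) else 0.
(* reflection r_i : f(x) |-> f(x_1,..,-x_i,..,x_n) *)
Definition rop (i : 'I_n) (f : PV n V) : PV n V :=
  fun a => (-1) ^+ (a i) *: f a.
(* partial derivative d/dx_i *)
Definition dop (i : 'I_n) (f : PV n V) : PV n V :=
  fun a => (a i).+1%:R *: f (incr i a).
(* division by x_i (exact quotient on polynomials divisible by x_i,
   which is the case for (1 - r_i) f) *)
Definition divx (i : 'I_n) (g : PV n V) : PV n V :=
  fun a => g (incr i a).
(* Dunkl operator T_i = d_i + mu_i/x_i (1 - r_i) *)
Definition Top (mu : 'I_n -> R) (i : 'I_n) (f : PV n V) : PV n V :=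
  fun a => dop i f a + mu i *: divx i (fun b => f b - rop i f b) a.

Variable e : 'I_n -> {linear V -> V}.

Definition DA (mu : 'I_n -> R) (A : {set 'I_n}) (f : PV n V) : PV n V :=
  fun a => \sum_(i in A) e i (Top mu i f a).
Definition xA (A : {set 'I_n}) (f : PV n V) : PV n V :=
  fun a => \sum_(i in A) e i (xop i f a).
Definition SA (mu : 'I_n -> R) (A : {set 'I_n}) (f : PV n V) : PV n V :=
  fun a => 2^-1 *: (xA A (DA mu A f) a - DA mu A (xA A f) a - f a).
Definition rA (A : {set 'I_n}) (f : PV n V) : PV n V :=
  foldr (fun i g => rop i \o g) id (enum A) f.
Definition Gamma (mu : 'I_n -> R) (A : {set 'I_n}) (f : PV n V) : PV n V :=
  SA mu A (rA A f).
End Ops.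

(* Main.v *)
Require Import Defs.
From HB Require Import structures.
From mathcomp Require Import all_boot all_order all_algebra ring zify.
From Stdlib Require Import FunctionalExtensionality.
Set Implicit Arguments. Unset Strict Implicit. Unset Printing Implicit Defensive.
Import Order.TTheory GRing.Theory Num.Theory.
Local Open Scope ring_scope.

Section Work.
Variables (R : realFieldType) (V : lmodType R) (n : nat).
Local Notation PV := (PV n V).
Local Notation midx := (midx n).
Local Notation Xop := (@xop R V n).

Lemma incrE i (a : midx) j : incr i a j = (a j + (j == i))%N.
Proof. by rewrite ffunE. Qed.
Lemma decrE i (a : midx) j : decr i a j = (a j - (j == i))%N.
Proof. by rewrite ffunE. Qed.
Lemma incr_self i (a : midx) : incr i a i = (a i).+1.
Proof. by rewrite incrE eqxx addn1. Qed.
Lemma decr_self i (a : midx) : decr i a i = (a i).-1.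
Proof. by rewrite decrE eqxx subn1. Qed.
Lemma incr_other i j (a : midx) : j != i -> incr i a j = a j.
Proof. by move=> h; rewrite incrE (negbTE h) addn0. Qed.
Lemma decr_other i j (a : midx) : j != i -> decr i a j = a j.
Proof. by move=> h; rewrite decrE (negbTE h) subn0. Qed.
Lemma decr_incr i (a : midx) : decr i (incr i a) = a.
Proof. apply/ffunP=> j; rewrite decrE incrE; case: (j == i) => /=; lia. Qed.
Lemma incr_decr i (a : midx) : (0 < a i)%N -> incr i (decr i a) = a.
Proof.
move=> h; apply/ffunP=> j; rewrite incrE decrE.
case: eqP => [->|] /=; lia.
Qed.
Lemma incrC i j (a : midx) : incr i (incr j a) = incr j (incr i a).
Proof. apply/ffunP=> k; rewrite !incrE; lia. Qed.
Lemma decrC i j (a : midx) : decr i (decr j a) = decr j (decr i a).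
Proof. apply/ffunP=> k; rewrite !decrE; lia. Qed.
Lemma incr_decrC i j (a : midx) : i != j -> incr i (decr j a) = decr j (incr i a).
Proof.
move=> hij; apply/ffunP=> k; rewrite !ffunE.
case: (eqVneq k i) => [->|hki]; first by rewrite (negbTE hij) /=; lia.
rewrite /=; lia.
Qed.

Definition tau (mu : 'I_n -> R) i (m : nat) : R :=
  m.+1%:R + mu i * (1 - (-1) ^+ m.+1).

Lemma TopE mu i (f : PV) a : Top mu i f a = tau mu i (a i) *: f (incr i a).
Proof.
rewrite /Top /dop /divx /rop /tau incr_self.
by rewrite -[X in X - _]scale1r -scalerBl scalerA scalerDl.
Qed.
Lemma xopE i (f : PV) a : xop i f a = if (0 < a i)%N then f (decr i a) else 0.
Proof. by []. Qed.
Lemma ropE i (f : PV) a : rop i f a = (-1) ^+ (a i) *: f a.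
Proof. by []. Qed.

Lemma rA_seq (s : seq 'I_n) (f : PV) a :
  foldr (fun i g => rop i \o g) id s f a = (-1) ^+ (\sum_(i <- s) a i)%N *: f a.
Proof.
elim: s => [|i s IH] /=; first by rewrite big_nil scale1r.
by rewrite ropE IH scalerA -exprD big_cons.
Qed.

Definition sgn (A : {set 'I_n}) (a : midx) : R := (-1) ^+ (\sum_(i <- enum A) a i)%N.

Lemma rAE A (f : PV) a : rA A f a = sgn A a *: f a.
Proof. exact: rA_seq. Qed.

Lemma sum_incr (s : seq 'I_n) i (a : midx) :
  (\sum_(j <- s) incr i a j = \sum_(j <- s) a j + count_mem i s)%N.
Proof.
elim: s => [|j s IH]; first by rewrite !big_nil.
by rewrite !big_cons IH incrE /= addnACA.
Qed.

Lemma sum_decr (s : seq 'I_n) i (a : midx) : (0 < a i)%N ->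
  (\sum_(j <- s) a j = \sum_(j <- s) decr i a j + count_mem i s)%N.
Proof.
move=> h; elim: s => [|j s IH]; first by rewrite !big_nil.
rewrite !big_cons IH decrE /=.
case: (eqVneq j i) => [->|_] /=; lia.
Qed.

Lemma sgn_incr A i (a : midx) : sgn A (incr i a) = (-1) ^+ (i \in A) * sgn A a.
Proof.
rewrite /sgn sum_incr exprD mulrC (count_uniq_mem _ (enum_uniq _)) mem_enum //.
Qed.

Lemma sgn_decr A i (a : midx) : (0 < a i)%N -> sgn A a = (-1) ^+ (i \in A) * sgn A (decr i a).
Proof.
move=> h; rewrite /sgn (sum_decr _ h) exprD mulrC (count_uniq_mem _ (enum_uniq _)) mem_enum //.
Qed.


Definition polyop (X : PV -> PV) :=
  exists c : midx -> seq (R * midx), forall f (a : midx), X f a = \sum_(p <- c a) p.1 *: f p.2.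

Lemma polyop_xop i : polyop (xop i).
Proof.
exists (fun a : midx => if (0 < a i)%N then [:: (1, decr i a)] else [::]) => f a.
rewrite xopE; case: ifP => _; by rewrite ?big_cons ?big_nil ?scale1r ?addr0.
Qed.
Lemma polyop_Top mu i : polyop (Top mu i).
Proof.
exists (fun a : midx => [:: (tau mu i (a i), incr i a)]) => f a.
by rewrite TopE big_cons big_nil addr0.
Qed.
Lemma polyop_rA A : polyop (rA A).
Proof.
exists (fun a : midx => [:: (sgn A a, a)]) => f a.
by rewrite rAE big_cons big_nil addr0.
Qed.

Section PolyGen.
Variable X : PV -> PV.
Hypothesis hX : polyop X.

Lemma pD f g : X (fun b => f b + g b) = fun a => X f a + X g a.
Proof.
case: hX => c hc; apply: functional_extensionality => a.
by rewrite !hc -big_split; apply: eq_bigr => p _; rewrite scalerDr.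
Qed.
Lemma pZ k f : X (fun b => k *: f b) = fun a => k *: X f a.
Proof.
case: hX => c hc; apply: functional_extensionality => a.
by rewrite !hc scaler_sumr; apply: eq_bigr => p _; rewrite !scalerA mulrC.
Qed.
Lemma pL (L : {linear V -> V}) f : X (fun b => L (f b)) = fun a => L (X f a).
Proof.
case: hX => c hc; apply: functional_extensionality => a.
by rewrite !hc linear_sum; apply: eq_bigr => p _; rewrite linearZ.
Qed.
Lemma psum (I : Type) (r : seq I) (P : pred I) (F : I -> PV) :
  X (fun b => \sum_(i <- r | P i) F i b) = fun a => \sum_(i <- r | P i) X (F i) a.
Proof.
case: hX => c hc; apply: functional_extensionality => a.
rewrite hc; under eq_bigr => p _ do rewrite scaler_sumr.
rewrite exchange_big; apply: eq_bigr => i _; by rewrite hc.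
Qed.
Lemma psumL (I : Type) (r : seq I) (P : pred I) (L : I -> {linear V -> V}) (F : I -> PV) :
  X (fun b => \sum_(i <- r | P i) L i (F i b)) = fun a => \sum_(i <- r | P i) L i (X (F i) a).
Proof.
rewrite psum; apply: functional_extensionality => a; apply: eq_bigr => i _.
by rewrite pL.
Qed.
End PolyGen.


Lemma R1 i j (h : PV) : xop i (xop j h) = xop j (xop i h).
Proof.
apply: functional_extensionality => a; rewrite !xopE.
case: (eqVneq i j) => [->//|hij].
rewrite !decr_other // 1?eq_sym // decrC.
by case: (0 < a i)%N; case: (0 < a j)%N.
Qed.

Lemma R2 mu i j (h : PV) : i != j -> Top mu i (xop j h) = xop j (Top mu i h).
Proof.
move=> hij; apply: functional_extensionality => a; rewrite !TopE !xopE.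
rewrite incr_other 1?eq_sym // TopE decr_other //.
case: ifP => _; last by rewrite scaler0.
by rewrite incr_decrC.
Qed.

Lemma R3 mu i j (h : PV) : Top mu i (Top mu j h) = Top mu j (Top mu i h).
Proof.
apply: functional_extensionality => a; rewrite !TopE.
case: (eqVneq i j) => [->//|hij].
have hji : j != i by rewrite eq_sym.
rewrite (incr_other _ hij) (incr_other _ hji) !scalerA mulrC incrC //.
Qed.

Lemma tau2 mu i m : tau mu i m.+2 - tau mu i m = 2.
Proof. rewrite /tau !exprS; rewrite -[m.+3]addn2 -[m.+1]addn1 !natrD; ring. Qed.
Lemma tau1 mu i : tau mu i 1 = 2.
Proof. rewrite /tau !exprS expr0; ring. Qed.

Lemma D1 mu k (g : PV) a :
  Top mu k (xop k (xop k g)) a - xop k (xop k (Top mu k g)) a = 2 *: xop k g a.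
Proof.
rewrite TopE [xop k (xop k g) _]xopE incr_self /= decr_incr.
rewrite [xop k (xop k (Top mu k g)) a]xopE.
case: (posnP (a k)) => [E|P].
  by rewrite [xop k g a]xopE E /= !scaler0 subr0.
rewrite [xop k (Top mu k g) _]xopE decr_self xopE P.
case: (ltnP 1 (a k)) => [Q|Q].
have Q' : (0 < (a k).-1)%N by lia.
  rewrite Q' TopE incr_decr; last by rewrite decr_self.
  rewrite !decr_self -scalerBl; congr (_ *: _).
  by rewrite -(tau2 mu k (a k).-1.-1); congr (tau _ _ _ - _); lia.
have ->: a k = 1%N by lia.
by rewrite /= tau1 subr0.
Qed.

Lemma D2 mu k (g : PV) a :
  xop k (Top mu k (Top mu k g)) a - Top mu k (Top mu k (xop k g)) a = (-2) *: Top mu k g a.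
Proof.
rewrite !TopE xopE !incr_self xopE incr_self /= !decr_incr !scalerA.
case: (posnP (a k)) => [E|P].
  by rewrite E /= tau1 sub0r mulrC -scaleNr mulNr.
rewrite !TopE decr_self incr_decr // !scalerA -scalerBl; congr (_ *: _).
have := tau2 mu k (a k).-1; rewrite prednK // => h.
have -> : tau mu k (a k).+1 = tau mu k (a k).-1 + 2 by rewrite -h; ring.
ring.
Qed.


Lemma sgn2 (b : bool) : (-1) ^+ b * (-1) ^+ b = 1 :> R.
Proof. by case: b; rewrite ?expr0 ?expr1 ?mulr1 ?mulN1r ?opprK. Qed.

Lemma S1 B i (h : PV) a : rA B (xop i h) a = (-1) ^+ (i \in B) *: xop i (rA B h) a.
Proof.
rewrite rAE !xopE; case: ifP => P; last by rewrite !scaler0.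
by rewrite rAE scalerA (sgn_decr B P).
Qed.

Lemma S2 mu B i (h : PV) a : rA B (Top mu i h) a = (-1) ^+ (i \in B) *: Top mu i (rA B h) a.
Proof.
rewrite rAE !TopE rAE !scalerA sgn_incr; congr (_ *: _).
by rewrite (mulrCA (tau mu i (a i))) (mulrA ((-1) ^+ (i \in B)) ((-1) ^+ (i \in B))) sgn2 mul1r mulrC.
Qed.

Lemma rAC A B (h : PV) : rA A (rA B h) = rA B (rA A h).
Proof.
by apply: functional_extensionality => a; rewrite !rAE !scalerA mulrC.
Qed.


Definition Lin (X : PV -> PV) :=
  (forall f g, X (fun b => f b + g b) = fun a => X f a + X g a) /\
  (forall (k : R) f, X (fun b => k *: f b) = fun a => k *: X f a).

Section LinGen.
Variable X : PV -> PV.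
Hypothesis hX : Lin X.
Lemma linD f g : X (fun b => f b + g b) = fun a => X f a + X g a.
Proof. exact: hX.1. Qed.
Lemma linZ k f : X (fun b => k *: f b) = fun a => k *: X f a.
Proof. exact: hX.2. Qed.
Lemma lin0 : X (fun _ => 0) = fun _ => 0.
Proof.
have h : (fun _ : midx => 0 : V) = (fun b => 0 *: (fun _ : midx => 0 : V) b).
  by apply: functional_extensionality => b; rewrite scale0r.
rewrite {1}h linZ; apply: functional_extensionality => a; by rewrite scale0r.
Qed.
Lemma linN f : X (fun b => - f b) = fun a => - X f a.
Proof.
have -> : (fun b => - f b) = (fun b => (-1) *: f b).
  by apply: functional_extensionality => b; rewrite scaleN1r.
rewrite linZ; apply: functional_extensionality => a; by rewrite scaleN1r.
Qed.
Lemma linB f g : X (fun b => f b - g b) = fun a => X f a - X g a.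
Proof. by rewrite linD linN. Qed.
Lemma linS (k : R) f g h : X (fun b => k *: (f b - g b - h b)) = fun a => k *: (X f a - X g a - X h a).
Proof.
rewrite (linZ k (fun b => f b - g b - h b)).
by rewrite (linB (fun b => f b - g b)) linB.
Qed.
Lemma lin_sum (I : Type) (r : seq I) (P : pred I) (F : I -> PV) :
  X (fun b => \sum_(i <- r | P i) F i b) = fun a => \sum_(i <- r | P i) X (F i) a.
Proof.
elim: r => [|i r IH].
  have -> : (fun b => \sum_(i <- [::] | P i) F i b) = fun _ => 0.
    by apply: functional_extensionality => b; rewrite big_nil.
  by rewrite lin0; apply: functional_extensionality => a; rewrite big_nil.
case: (boolP (P i)) => Pi.
  have -> : (fun b => \sum_(j <- i :: r | P j) F j b) =
            (fun b => F i b + \sum_(j <- r | P j) F j b).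
    by apply: functional_extensionality => b; rewrite big_cons Pi.
  rewrite linD IH; apply: functional_extensionality => a; by rewrite big_cons Pi.
have -> : (fun b => \sum_(j <- i :: r | P j) F j b) =
          (fun b => \sum_(j <- r | P j) F j b).
  by apply: functional_extensionality => b; rewrite big_cons (negbTE Pi).
rewrite IH; apply: functional_extensionality => a; by rewrite big_cons (negbTE Pi).
Qed.
End LinGen.

Lemma Lin_poly X : polyop X -> Lin X.
Proof. move=> hX; split; [move=> f g; exact: pD|move=> k f; exact: pZ]. Qed.
Lemma Lin_comp X Y : Lin X -> Lin Y -> Lin (fun f => X (Y f)).
Proof. move=> hX hY; split; [move=> f g|move=> k f]; by rewrite ?(linD hY) ?(linD hX) ?(linZ hY) ?(linZ hX). Qed.

Lemma V3 (x1 x2 y1 y2 z1 z2 : V) :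
  (x1 + x2) - (y1 + y2) - (z1 + z2) = (x1 - y1 - z1) + (x2 - y2 - z2).
Proof. by rewrite !opprD (addrACA x1) (addrACA (x1 - y1)). Qed.


Section ESec.
Variable mu : 'I_n -> R.
Variable e : 'I_n -> {linear V -> V}.
Hypothesis hcl : forall (i j : 'I_n) (v : V),
      e i (e j v) + e j (e i v) = - ((2 * (i == j)%N)%:R *: v).

Lemma e_anti i k v : i != k -> e k (e i v) = - e i (e k v).
Proof.
move=> h; have h' : (k == i) = false by rewrite eq_sym (negbTE h).
apply/eqP; rewrite -addr_eq0 hcl h' muln0 scale0r oppr0 //.
Qed.
Lemma half (x y : V) : x + x = y + y -> x = y.
Proof.
move=> h; have : (2 : R) *: x = (2 : R) *: y by rewrite !scaler_nat !mulr2n.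
move/(congr1 (fun v => (2 : R)^-1 *: v)); rewrite !scalerA mulVf ?scale1r //.
by rewrite pnatr_eq0.
Qed.
Lemma e_sq i v : e i (e i v) = - v.
Proof.
apply: half; rewrite hcl eqxx muln1 scaler_nat mulr2n opprD //.
Qed.

Lemma big_split_rev (I : finType) (P : pred I) (F G : I -> V) :
  \sum_(i | P i) F i + \sum_(i | P i) G i = \sum_(i | P i) (F i + G i).
Proof. by rewrite big_split. Qed.

Lemma cliff (A : {set 'I_n}) (w : 'I_n -> 'I_n -> V) (hw : forall i j, w i j = w j i) :
  \sum_(i in A) e i (\sum_(j in A) e j (w i j)) = - \sum_(i in A) w i i.
Proof.
under eq_bigr => i _ do rewrite linear_sum.
set S := \sum_(i in A) _.
have h2 : S + S = - (\sum_(i in A) w i i + \sum_(i in A) w i i).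
  rewrite {2}/S exchange_big /S big_split_rev big_split_rev -sumrN.
  apply: eq_bigr => i iA; rewrite -big_split /= (bigD1 i) //= hcl eqxx muln1.
  rewrite big1 ?addr0; last first.
    by move=> j /andP [_ hji]; rewrite hw hcl eq_sym (negbTE hji) muln0 scale0r oppr0.
  by rewrite scaler_nat mulr2n opprD.
by apply: half; rewrite h2 opprD.
Qed.

Definition oddop (Q : 'I_n -> PV -> PV) (A : {set 'I_n}) (f : PV) : PV :=
  fun a => \sum_(i in A) e i (Q i f a).

Lemma Lin_odd Q A : (forall i, polyop (Q i)) -> Lin (oddop Q A).
Proof.
move=> hQ; split; [move=> f g|move=> k f]; apply: functional_extensionality => a;
rewrite /oddop.
  rewrite -big_split; apply: eq_bigr => i _ /=; by rewrite (pD (hQ i)) linearD.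
rewrite scaler_sumr; apply: eq_bigr => i _ /=; by rewrite (pZ (hQ i)) linearZ.
Qed.

Lemma odd_sq Q A (hQ : forall i, polyop (Q i))
  (hc : forall i j h, Q i (Q j h) = Q j (Q i h)) g :
  oddop Q A (oddop Q A g) = fun a => - \sum_(i in A) Q i (Q i g) a.
Proof.
apply: functional_extensionality => a; rewrite /oddop.
under eq_bigr => i _ do rewrite (psumL (hQ i)).
by rewrite cliff // => i j; rewrite hc.
Qed.

Lemma comm_gen Q1 Q2 Z A (c : R) (hQ1 : forall i, polyop (Q1 i))
  (hQ2 : forall i, polyop (Q2 i)) (hZ : forall i, polyop (Z i))
  (h1 : forall k i h, i != k -> Q2 k (Q1 i (Q1 i h)) = Q1 i (Q1 i (Q2 k h)))
  (h2 : forall k h a, Q2 k (Q1 k (Q1 k h)) a - Q1 k (Q1 k (Q2 k h)) a = c *: Z k h a)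
  g a :
  oddop Q2 A (fun b => \sum_(i in A) Q1 i (Q1 i g) b) a
  - \sum_(i in A) Q1 i (Q1 i (oddop Q2 A g)) a = c *: oddop Z A g a.
Proof.
rewrite /oddop.
under eq_bigr => k _ do rewrite (psum (hQ2 k)).
under [X in _ - X]eq_bigr => i _ do rewrite !(psumL (hQ1 i)).
rewrite [X in _ - X]exchange_big -sumrB scaler_sumr; apply: eq_bigr => k kA /=.
rewrite -linear_sum -linearB -linearZ /= -sumrB; congr (e k _).
rewrite (bigD1 k) //= h2 big1 ?addr0 // => i /andP [_ hik].
by rewrite h1 // subrr.
Qed.


Lemma xA_odd A : xA e A = oddop Xop A. Proof. by []. Qed.
Lemma DA_odd A : DA e mu A = oddop (Top mu) A. Proof. by []. Qed.

Lemma Lin_xA A : Lin (xA e A).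
Proof. rewrite xA_odd; apply: Lin_odd => i; exact: polyop_xop. Qed.
Lemma Lin_DA A : Lin (DA e mu A).
Proof. rewrite DA_odd; apply: Lin_odd => i; exact: polyop_Top. Qed.

Lemma Lin_SA A : Lin (SA e mu A).
Proof.
split; [move=> f g|move=> k f]; rewrite /SA; apply: functional_extensionality => a.
  rewrite (linD (Lin_DA A)) (linD (Lin_xA A)) (linD (Lin_xA A)) (linD (Lin_DA A)).
  by rewrite V3 scalerDr.
rewrite (linZ (Lin_DA A)) (linZ (Lin_xA A)) (linZ (Lin_xA A)) (linZ (Lin_DA A)).
by rewrite -!scalerBr !scalerA mulrC.
Qed.

Lemma Lin_rA A : Lin (rA A).
Proof. apply: Lin_poly; exact: polyop_rA. Qed.

Lemma Lin_Gamma A : Lin (Gamma e mu A).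
Proof. exact: (Lin_comp (Lin_SA A) (Lin_rA A)). Qed.

Lemma SA_sign A Y (s : R) (hY : Lin Y) (hs : s * s = 1)
  (hx : forall g, Y (xA e A g) = fun a => s *: xA e A (Y g) a)
  (hd : forall g, Y (DA e mu A g) = fun a => s *: DA e mu A (Y g) a) g :
  Y (SA e mu A g) = SA e mu A (Y g).
Proof.
rewrite /SA (linS hY) hx hd hd hx; apply: functional_extensionality => a /=.
rewrite (linZ (Lin_xA A)) (linZ (Lin_DA A)) !scalerA hs !scale1r //.
Qed.

Lemma osp_x A g : SA e mu A (xA e A g) = fun a => - xA e A (SA e mu A g) a.
Proof.
apply: functional_extensionality => a; rewrite /SA (linS (Lin_xA A)).
pose P1 := fun g : PV => fun a => \sum_(i in A) xop i (xop i g) a.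
have sq : forall h, xA e A (xA e A h) = fun a => - P1 h a.
  move=> h; rewrite xA_odd odd_sq //; [exact: polyop_xop|exact: R1].
rewrite sq /= sq (linN (Lin_DA A)).
have h1 : forall k i h, i != k -> Top mu k (Xop i (Xop i h)) = Xop i (Xop i (Top mu k h)).
  by move=> k i h hik; rewrite eq_sym in hik; rewrite !R2.
have cm := comm_gen (Q1 := Xop) (Q2 := Top mu) (Z := Xop) A (c := 2)
  polyop_xop (polyop_Top mu) polyop_xop h1 (fun k h a => D1 mu k h a) g a.
rewrite -DA_odd -xA_odd in cm.
move: cm; rewrite /P1 => /eqP; rewrite subr_eq => /eqP ->.
set X := xA e A (DA e mu A (xA e A g)) a.
set PD := \sum_(i in A) _.
rewrite -scalerN; congr (_ *: _).
rewrite !opprD !opprK scaler_nat mulr2n.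
apply/eqP; rewrite subr_eq; apply/eqP.
by rewrite -[RHS]addrA [RHS]addrC addrCA (addrC X PD).
Qed.


Lemma osp_D A g : SA e mu A (DA e mu A g) = fun a => - DA e mu A (SA e mu A g) a.
Proof.
apply: functional_extensionality => a; rewrite /SA (linS (Lin_DA A)).
pose P2 := fun g : PV => fun a => \sum_(i in A) Top mu i (Top mu i g) a.
have sq : forall h, DA e mu A (DA e mu A h) = fun a => - P2 h a.
  move=> h; rewrite DA_odd odd_sq //; [move=> i; exact: polyop_Top|exact: R3].
rewrite sq /= sq (linN (Lin_xA A)).
have h1 : forall k i h, i != k -> Xop k (Top mu i (Top mu i h)) = Top mu i (Top mu i (Xop k h)).
  by move=> k i h hik; rewrite !R2.
have cm := comm_gen (Q1 := Top mu) (Q2 := Xop) (Z := Top mu) A (c := -2)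
  (polyop_Top mu) polyop_xop (polyop_Top mu) h1 (fun k h a => D2 mu k h a) g a.
rewrite -DA_odd -xA_odd in cm.
move: cm; rewrite /P2 => /eqP; rewrite subr_eq => /eqP ->.
set Y := DA e mu A (xA e A (DA e mu A g)) a.
set PX := \sum_(i in A) _.
rewrite -scalerN; congr (_ *: _).
set D := DA e mu A g a.
rewrite scaleNr scaler_nat mulr2n !opprD !opprK.
rewrite (addrAC _ (-Y) (-D)) (addrAC _ (-PX) (-D)) addrK.
by rewrite [LHS]addrC (addrC D) addrA.
Qed.


Lemma rA_odd (A B : {set 'I_n}) (Q : 'I_n -> PV -> PV) (b : bool) (hb : forall i, i \in A -> (i \in B) = b)
  (hQ : forall i h a, rA B (Q i h) a = (-1) ^+ (i \in B) *: Q i (rA B h) a) h :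
  rA B (oddop Q A h) = fun a => (-1) ^+ b *: oddop Q A (rA B h) a.
Proof.
rewrite /oddop (psumL (polyop_rA B)); apply: functional_extensionality => a.
rewrite scaler_sumr; apply: eq_bigr => i iA.
by rewrite hQ hb // linearZ.
Qed.

Lemma rA_xA (A B : {set 'I_n}) (b : bool) (hb : forall i, i \in A -> (i \in B) = b) h :
  rA B (xA e A h) = fun a => (-1) ^+ b *: xA e A (rA B h) a.
Proof. rewrite xA_odd; apply: rA_odd => // i h' a; exact: S1. Qed.
Lemma rA_DA (A B : {set 'I_n}) (b : bool) (hb : forall i, i \in A -> (i \in B) = b) h :
  rA B (DA e mu A h) = fun a => (-1) ^+ b *: DA e mu A (rA B h) a.
Proof. rewrite DA_odd; apply: rA_odd => // i h' a; exact: S2. Qed.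

Lemma Gamma_xA A h : Gamma e mu A (xA e A h) = xA e A (Gamma e mu A h).
Proof.
rewrite /Gamma (rA_xA (b := true)) // expr1 (linZ (Lin_SA A)) osp_x.
by apply: functional_extensionality => a; rewrite scaleN1r opprK.
Qed.
Lemma Gamma_DA A h : Gamma e mu A (DA e mu A h) = DA e mu A (Gamma e mu A h).
Proof.
rewrite /Gamma (rA_DA (b := true)) // expr1 (linZ (Lin_SA A)) osp_D.
by apply: functional_extensionality => a; rewrite scaleN1r opprK.
Qed.


Definition EP (k : 'I_n) (P : PV -> PV) (f : PV) : PV := fun a => e k (P f a).

Lemma Lin_EP k P : polyop P -> Lin (EP k P).
Proof.
move=> hP; split; [move=> f g|move=> c f]; rewrite /EP;
apply: functional_extensionality => a.
  by rewrite (pD hP) linearD.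
by rewrite (pZ hP) linearZ.
Qed.

Lemma anti_EP (A : {set 'I_n}) k P (Q : 'I_n -> PV -> PV) (hP : polyop P)
  (hQ : forall i, polyop (Q i)) (kA : k \notin A)
  (hc : forall i h, i \in A -> P (Q i h) = Q i (P h)) h :
  EP k P (oddop Q A h) = fun a => (-1) *: oddop Q A (EP k P h) a.
Proof.
apply: functional_extensionality => a; rewrite /EP /oddop (psumL hP) linear_sum.
rewrite scaler_sumr; apply: eq_bigr => i iA.
rewrite (pL (hQ i)) hc // e_anti ?scaleN1r //.
by apply: contraNneq kA => <-.
Qed.

Lemma Gamma_EP (A : {set 'I_n}) k P (kA : k \notin A)
  (hP : polyop P)
  (hS : forall h a, rA A (P h) a = (-1) ^+ (k \in A) *: P (rA A h) a)
  (hcx : forall i h, i \in A -> P (Xop i h) = Xop i (P h))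
  (hcd : forall i h, i \in A -> P (Top mu i h) = Top mu i (P h)) h :
  Gamma e mu A (EP k P h) = EP k P (Gamma e mu A h).
Proof.
rewrite /Gamma.
have -> : rA A (EP k P h) = EP k P (rA A h).
  apply: functional_extensionality => a; rewrite /EP (pL (polyop_rA A)).
  by rewrite hS (negbTE kA) expr0 scale1r.
symmetry; apply: (SA_sign (s := -1)).
- exact: Lin_EP.
- by rewrite mulN1r opprK.
- move=> g; rewrite xA_odd; apply: anti_EP => //; exact: polyop_xop.
- move=> g; rewrite DA_odd; apply: anti_EP => // i; exact: polyop_Top.
Qed.

Lemma Gamma_EPx (A : {set 'I_n}) k (kA : k \notin A) h :
  Gamma e mu A (EP k (Xop k) h) = EP k (Xop k) (Gamma e mu A h).
Proof.
apply: Gamma_EP => //; first exact: polyop_xop.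
- by move=> h' a; rewrite S1.
- by move=> i h' _; rewrite R1.
- move=> i h' iA; rewrite R2 //; by apply: contraNneq kA => <-.
Qed.

Lemma Gamma_EPT (A : {set 'I_n}) k (kA : k \notin A) h :
  Gamma e mu A (EP k (Top mu k) h) = EP k (Top mu k) (Gamma e mu A h).
Proof.
apply: Gamma_EP => //; first exact: polyop_Top.
- by move=> h' a; rewrite S2.
- move=> i h' iA; rewrite R2 //; by apply: contraNneq kA => ->.
- by move=> i h' _; rewrite R3.
Qed.


Lemma Gamma_oddB (A B : {set 'I_n}) (Q : 'I_n -> PV -> PV)
  (hAB : A \subset B \/ [disjoint A & B])
  (hin : forall h, Gamma e mu A (oddop Q A h) = oddop Q A (Gamma e mu A h))
  (hout : forall k h, k \notin A -> Gamma e mu A (EP k (Q k) h) = EP k (Q k) (Gamma e mu A h))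
  h : Gamma e mu A (oddop Q B h) = oddop Q B (Gamma e mu A h).
Proof.
have LG := Lin_Gamma A.
have sp : forall g, oddop Q B g = fun a => \sum_(i in B | i \in A) e i (Q i g a)
                                      + \sum_(i in B | i \notin A) e i (Q i g a).
  by move=> g; apply: functional_extensionality => a; rewrite /oddop (bigID (fun i => i \in A)).
rewrite sp (linD LG) [RHS]sp; apply: functional_extensionality => a /=.
congr (_ + _); last first.
  rewrite (lin_sum LG); apply: eq_bigr => i /andP [_ iA]; have := hout i h iA; rewrite /EP => ->.
  by [].
case: hAB => [sAB|dAB].
  have eq : forall F : 'I_n -> V, \sum_(i in B | i \in A) F i = \sum_(i in A) F i.
    move=> F; apply: eq_bigl => i; case iA: (i \in A); rewrite ?andbF ?andbT //.
    by rewrite (subsetP sAB).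
  have -> : (fun b => \sum_(i in B | i \in A) e i (Q i h b)) = oddop Q A h.
    by apply: functional_extensionality => b; rewrite eq.
  by rewrite hin eq.
have eq : forall F : 'I_n -> V, \sum_(i in B | i \in A) F i = 0.
  move=> F; rewrite big_pred0 // => i; case iA: (i \in A); rewrite ?andbF //.
  by rewrite (disjointFr dAB iA).
have -> : (fun b => \sum_(i in B | i \in A) e i (Q i h b)) = fun _ => 0.
  by apply: functional_extensionality => b; rewrite eq.
by rewrite (lin0 LG) eq.
Qed.

Lemma Gamma_SAB (A B : {set 'I_n}) (hAB : A \subset B \/ [disjoint A & B]) h :
  Gamma e mu A (SA e mu B h) = SA e mu B (Gamma e mu A h).
Proof.
have hx : forall g, Gamma e mu A (xA e B g) = xA e B (Gamma e mu A g).
  move=> g; rewrite xA_odd; apply: Gamma_oddB => // [h'|k h' kA].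
    by rewrite -xA_odd Gamma_xA.
  exact: Gamma_EPx.
have hd : forall g, Gamma e mu A (DA e mu B g) = DA e mu B (Gamma e mu A g).
  move=> g; rewrite DA_odd; apply: Gamma_oddB => // [h'|k h' kA].
    by rewrite -DA_odd Gamma_DA.
  exact: Gamma_EPT.
by rewrite /SA (linS (Lin_Gamma A)) hx hd hd hx.
Qed.

Lemma Gamma_rAB (A B : {set 'I_n}) (hAB : A \subset B \/ [disjoint A & B]) h :
  Gamma e mu A (rA B h) = rA B (Gamma e mu A h).
Proof.
have [b hb] : exists b : bool, forall i, i \in A -> (i \in B) = b.
  case: hAB => [sAB|dAB]; [exists true => i iA; exact: (subsetP sAB)|].
  by exists false => i iA; rewrite (disjointFr dAB iA).
rewrite /Gamma rAC; symmetry; apply: (SA_sign (s := (-1) ^+ b)).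
- exact: Lin_rA.
- exact: sgn2.
- by move=> g; rewrite (rA_xA (b := b)).
- by move=> g; rewrite (rA_DA (b := b)).
Qed.

Lemma Gamma_comm (A B : {set 'I_n}) (hAB : A \subset B \/ [disjoint A & B]) f :
  Gamma e mu A (Gamma e mu B f) = Gamma e mu B (Gamma e mu A f).
Proof.
by rewrite [in RHS]/Gamma -Gamma_rAB // -Gamma_SAB.
Qed.

End ESec.

End Work.

Theorem lemma3 (R : realFieldType) (V : lmodType R) (n : nat) (hn : (1 <= n)%N)
  (mu : 'I_n -> R) (hmu : forall i, 0 < mu i)
  (e : 'I_n -> {linear V -> V})
  (hcl : forall (i j : 'I_n) (v : V),
      e i (e j v) + e j (e i v) = - ((2 * (i == j)%N)%:R *: v))
  (A B : {set 'I_n})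
  (hAB : [\/ A \subset B, B \subset A | [disjoint A & B]])
  (f : PV n V) (hf : is_poly f) :
  Gamma e mu A (Gamma e mu B f) = Gamma e mu B (Gamma e mu A f).
Proof.
case: hAB => [sAB|sBA|dAB].
- by apply: (Gamma_comm mu hcl); left.
- by symmetry; apply: (Gamma_comm mu hcl); left.
- by apply: (Gamma_comm mu hcl); right.
Qed.
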